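(* Let $n,m\ge 3$ and let $G=P_n\square P_m$ be the grid graph. Every $3$-minimal of $G$ contains at least two vertices on the same line.
   Context: The grid graph $P_n\square P_m$ has vertex set $\{(i,j):0\le i\le n-1,\ 0\le j\le m-1\}$, with $(i,j)$ adjacent to $(k,l)$ iff $|i-k|+|j-l|=1$; distance $d((i,j),(k,l))=|i-k|+|j-l|$. A vertex $w$ resolves $u,v$ if $d(w,u)\ne d(w,v)$; a set $R$ is resolving if every pair of distinct vertices is resolved by some vertex of $R$; a $3$-minimal is a resolving set $R$ of cardinality $3$ such that no $R\setminus\{x\}$, $x\in R$, is resolving. Two vertices are on the same line if they share their first coordinate or share their second coordinate. *)

(* Defs.v *)
From mathcomp Require Import all_boot.
Set Implicit Arguments. Unset Strict Implicit. Unset Printing Implicit Defensive.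

Definition gvert (n m : nat) := ('I_n * 'I_m)%type.

Definition absdiff (a b : nat) : nat := (a - b) + (b - a).

(* Grid (Manhattan) distance: d((i,j),(k,l)) = |i-k| + |j-l|. *)
Definition gdist (n m : nat) (u v : gvert n m) : nat :=
  absdiff u.1 v.1 + absdiff u.2 v.2.

Definition resolves (n m : nat) (w u v : gvert n m) : bool :=
  gdist w u != gdist w v.

Definition resolving (n m : nat) (R : {set gvert n m}) : Prop :=
  forall u v : gvert n m, u <> v -> exists2 w, w \in R & resolves w u v.

Definition three_minimal (n m : nat) (R : {set gvert n m}) : Prop :=
  [/\ #|R| = 3, resolving R & forall x, x \in R -> ~ resolving (R :\ x)].

Definition same_line (n m : nat) (u v : gvert n m) : bool :=
  (u.1 == v.1) || (u.2 == v.2).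

(* Main.v *)
Require Import Defs.
From mathcomp Require Import all_boot zify.
Definition T1 (p q x y : nat) := (x <= p /\ q < y) \/ (p < x /\ y <= q).
Definition T2 (p q x y : nat) := (x <= p /\ y <= q) \/ (p < x /\ q < y).
Lemma cut (n m x1 x2 x3 y1 y2 y3 : nat) :
  x1 < n -> x2 < n -> x3 < n -> y1 < m -> y2 < m -> y3 < m ->
  x1 != x2 -> x1 != x3 -> x2 != x3 -> y1 != y2 -> y1 != y3 -> y2 != y3 ->
  exists p q, [/\ p.+1 < n, q.+1 < m &
    (T1 p q x1 y1 /\ T1 p q x2 y2 /\ T1 p q x3 y3) \/
    (T2 p q x1 y1 /\ T2 p q x2 y2 /\ T2 p q x3 y3)].
Proof.
rewrite /T1 /T2 => *.
case: (ltngtP x1 x2); case: (ltngtP x1 x3); case: (ltngtP x2 x3);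
case: (ltngtP y1 y2); case: (ltngtP y1 y3); case: (ltngtP y2 y3); try lia;
move=> *;
first [ exists x1, y1; split; lia | exists x1, y2; split; lia | exists x1, y3; split; lia
      | exists x2, y1; split; lia | exists x2, y2; split; lia | exists x2, y3; split; lia
      | exists x3, y1; split; lia | exists x3, y2; split; lia | exists x3, y3; split; lia].
Qed.

Arguments cut {n m x1 x2 x3 y1 y2 y3}.
Lemma d1 p q x y : T1 p q x y ->
  absdiff x p + absdiff y q = absdiff x p.+1 + absdiff y q.+1.
Proof. rewrite /T1 /absdiff; lia. Qed.
Lemma d2 p q x y : T2 p q x y ->
  absdiff x p + absdiff y q.+1 = absdiff x p.+1 + absdiff y q.
Proof. rewrite /T2 /absdiff; lia. Qed.

Theorem lemma3 (n m : nat) (hn : 3 <= n) (hm : 3 <= m) (R : {set gvert n m}) :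
  three_minimal R ->
  exists u v, [/\ u \in R, v \in R, u != v & same_line u v].
Proof.
case=> cR res _.
have: 0 < #|R| by rewrite cR.
case/card_gt0P=> a aR.
have cRa : #|R :\ a| = 2 by move: (cardsD1 a R); rewrite aR cR add1n => -[].
move/eqP: cRa; move/cards2P => [b [c [bc Rbc]]].
have bR : b \in R by have := setD1K aR; rewrite Rbc => <-; rewrite !inE eqxx orbT.
have cR' : c \in R by have := setD1K aR; rewrite Rbc => <-; rewrite !inE eqxx !orbT.
have ab : a != b.
  have : b \in R :\ a by rewrite Rbc !inE eqxx.
  by rewrite !inE eq_sym => /andP[].
have ac : a != c.
  have : c \in R :\ a by rewrite Rbc !inE eqxx orbT.
  by rewrite !inE eq_sym => /andP[].
have inR w : w \in R -> [\/ w = a, w = b | w = c].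
  move=> wR; case: (eqVneq w a) => [->|wa]; first by constructor 1.
  have : w \in R :\ a by rewrite !inE wa.
  by rewrite Rbc !inE => /orP[/eqP->|/eqP->]; [constructor 2|constructor 3].
case sab: (same_line a b); first by exists a, b.
case sac: (same_line a c); first by exists a, c.
case sbc: (same_line b c); first by exists b, c.
exfalso.
move: sab sac sbc; rewrite /same_line => /norP[h1 h2] /norP[h3 h4] /norP[h5 h6].
have [p [q [pn qm H]]] := cut (ltn_ord a.1) (ltn_ord b.1) (ltn_ord c.1)
   (ltn_ord a.2) (ltn_ord b.2) (ltn_ord c.2) h1 h3 h5 h2 h4 h6.
case: H => [[t1 [t2 t3]]|[t1 [t2 t3]]].
- pose u : gvert n m := (Ordinal (ltnW pn), Ordinal (ltnW qm)).
  pose v : gvert n m := (Ordinal pn, Ordinal qm).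
  have uv : u <> v by move=> /(congr1 (fun z : gvert n m => val z.1)) /=; lia.
  have [w wR] := res u v uv.
  rewrite /resolves /gdist /=.
  by case: (inR w wR) => ->; move/eqP; apply; apply: d1.
- pose u : gvert n m := (Ordinal (ltnW pn), Ordinal qm).
  pose v : gvert n m := (Ordinal pn, Ordinal (ltnW qm)).
  have uv : u <> v by move=> /(congr1 (fun z : gvert n m => val z.1)) /=; lia.
  have [w wR] := res u v uv.
  rewrite /resolves /gdist /=.
  by case: (inR w wR) => ->; move/eqP; apply; apply: d2.
Qed.
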